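(* Let $A\in\mathbb{R}^{m\times n}$, $b\in\mathbb{R}^m$, $f(x)=\frac12\|Ax-b\|^2$, and let $x^k,x^{k-1}\in\mathbb{R}^n$ with $\nabla f(x^k)\neq 0$ and $x^k\neq x^{k-1}$. Let $g=\nabla f(x^k)/\|\nabla f(x^k)\|$, $d=(x^k-x^{k-1})/\|x^k-x^{k-1}\|$, $\epsilon=g^td$, $S_{11}=g^tA^tAg$, $S_{12}=g^tA^tAd$, $S_{22}=d^tA^tAd$, $\eta_1=1-\epsilon^2$, $\eta_2=-S_{11}-S_{22}+2\epsilon S_{12}$, $\eta_3=S_{11}S_{22}-S_{12}^2$. Then the equation $\eta_1\sigma^2+\eta_2\sigma+\eta_3=0$ has a real solution $\sigma$.
   Context: $\|\cdot\|$ denotes the Euclidean norm. *)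

(* Defs.v *)
From mathcomp Require Import all_boot all_order all_algebra.
From mathcomp Require Import reals.
Set Implicit Arguments. Unset Strict Implicit. Unset Printing Implicit Defensive.
Import Order.TTheory GRing.Theory Num.Theory.
Local Open Scope ring_scope.

Definition dotv (R : realType) (n : nat) (u v : 'cV[R]_n) : R := \sum_(i < n) u i 0 * v i 0.

Definition enorm (R : realType) (n : nat) (u : 'cV[R]_n) : R := Num.sqrt (dotv u u).

Definition lsq (R : realType) (m n : nat) (A : 'M[R]_(m, n)) (b : 'cV[R]_m) (x : 'cV[R]_n) : R :=
  2^-1 * enorm (A *m x - b) ^+ 2.

Definition lsq_grad (R : realType) (m n : nat) (A : 'M[R]_(m, n)) (b : 'cV[R]_m) (x : 'cV[R]_n) : 'cV[R]_n :=
  A^T *m (A *m x - b).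

(* Main.v *)
Require Import Defs.
From mathcomp Require Import all_boot all_order all_algebra.
From mathcomp Require Import reals.
From mathcomp Require Import ring lra.
Import Order.TTheory GRing.Theory Num.Theory.
Local Open Scope ring_scope.

Lemma quad_root (R : realType) (a b c s : R) :
  0 <= a -> 0 <= c -> a * s ^+ 2 + b * s + c <= 0 ->
  exists x : R, a * x ^+ 2 + b * x + c = 0.
Proof.
move=> a0 c0 hs.
have [ae|anz] := eqVneq a 0.
  subst a; have [be|bnz] := eqVneq b 0.
    subst b; exists 0; move: hs; rewrite !mul0r !add0r => hs.
    by apply/eqP; rewrite eq_le hs c0.
  by exists (- c / b); field.
have ap : 0 < a by rewrite lt_def anz a0.
set D := b ^+ 2 - 4 * a * c.
have D0 : 0 <= D.
  have : 4 * a * (a * s ^+ 2 + b * s + c) <= 0.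
    by rewrite pmulr_rle0 // mulr_gt0.
  have : 0 <= (2 * a * s + b) ^+ 2 by apply: sqr_ge0.
  rewrite /D; nra.
exists ((- b + Num.sqrt D) / (2 * a)).
have hD : Num.sqrt D ^+ 2 = D by rewrite sqr_sqrtr.
rewrite /D in hD.
set x := (- b + Num.sqrt D) / (2 * a).
have a2 : 2 * a != 0 by rewrite mulf_neq0 // pnatr_eq0.
have e : a * x ^+ 2 + b * x + c = (a * (Num.sqrt D ^+ 2 - (b ^+ 2 - 4 * a * c))) / (2 * a) ^+ 2.
  by rewrite /x; field.
by rewrite e hD subrr mulr0 mul0r.
Qed.

Section Dot.
Variables (R : realType) (n : nat).
Implicit Types (u v : 'cV[R]_n).

Lemma dot_quad u v t : dotv (u - t *: v) (u - t *: v) =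
  dotv u u - 2 * t * dotv u v + t ^+ 2 * dotv v v.
Proof.
rewrite /dotv.
rewrite (eq_bigr (fun i : 'I_n => u i 0 * u i 0 - 2 * t * (u i 0 * v i 0) + t ^+ 2 * (v i 0 * v i 0))); last first.
  by move=> i _; rewrite !mxE; ring.
by rewrite big_split /= big_split /= sumrN -!mulr_sumr.
Qed.

Lemma dot_ge0 u : 0 <= dotv u u.
Proof. by rewrite /dotv; apply: sumr_ge0 => i _; rewrite -expr2 sqr_ge0. Qed.

Lemma dot_eq0 u : dotv u u = 0 -> u = 0.
Proof.
move=> /eqP; rewrite /dotv psumr_eq0; last by move=> i _; rewrite -expr2 sqr_ge0.
move=> /allP H; apply/matrixP => i j; rewrite (ord1 j) mxE.
have := H i (mem_index_enum i); rewrite /= mulf_eq0 orbb => /eqP //.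
Qed.

Lemma dot0r u : dotv u 0 = 0.
Proof. by rewrite /dotv big1 // => i _; rewrite mxE mulr0. Qed.

Lemma dotZZ c u : dotv (c *: u) (c *: u) = c ^+ 2 * dotv u u.
Proof.
rewrite /dotv mulr_sumr; apply: eq_bigr => i _; rewrite !mxE; ring.
Qed.

Lemma CS u v : dotv u v ^+ 2 <= dotv u u * dotv v v.
Proof.
have [C0|Cn] := eqVneq (dotv v v) 0.
  by rewrite C0 mulr0 (dot_eq0 _ C0) dot0r expr0n.
have Cp : 0 < dotv v v by rewrite lt_def Cn dot_ge0.
have := dot_ge0 (u - (dotv u v / dotv v v) *: v); rewrite dot_quad.
set A := dotv u u; set B := dotv u v; set C := dotv v v => h.
have : 0 <= C * (A - 2 * (B / C) * B + (B / C) ^+ 2 * C) by rewrite mulr_ge0 // ltW.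
have -> : C * (A - 2 * (B / C) * B + (B / C) ^+ 2 * C) = A * C - B ^+ 2 by field.
by rewrite subr_ge0.
Qed.

End Dot.

Lemma unit_dot (R : realType) (n : nat) (x : 'cV[R]_n) : x != 0 ->
  dotv ((enorm x)^-1 *: x) ((enorm x)^-1 *: x) = 1.
Proof.
move=> xn; rewrite dotZZ /enorm exprVn sqr_sqrtr ?dot_ge0 // mulVf //.
by apply/eqP => /dot_eq0 h; move: xn; rewrite h eqxx.
Qed.

Theorem claim1 (R : realType) (m n : nat) (A : 'M[R]_(m, n)) (b : 'cV[R]_m)
  (xk xk1 : 'cV[R]_n) :
  lsq_grad A b xk != 0 -> xk != xk1 ->
  let g := (enorm (lsq_grad A b xk))^-1 *: lsq_grad A b xk in
  let d := (enorm (xk - xk1))^-1 *: (xk - xk1) in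
  let eps := dotv g d in
  let S11 := dotv (A *m g) (A *m g) in
  let S12 := dotv (A *m g) (A *m d) in
  let S22 := dotv (A *m d) (A *m d) in
  let eta1 := 1 - eps ^+ 2 in
  let eta2 := - S11 - S22 + 2 * eps * S12 in
  let eta3 := S11 * S22 - S12 ^+ 2 in
  exists sigma : R, eta1 * sigma ^+ 2 + eta2 * sigma + eta3 = 0.
Proof.
move=> hg hx g d eps S11 S12 S22 eta1 eta2 eta3.
have gg : dotv g g = 1 by exact: unit_dot.
have dd : dotv d d = 1 by apply: unit_dot; rewrite subr_eq0.
have e1 : 0 <= eta1 by rewrite /eta1 subr_ge0 /eps; have := @CS _ _ g d; rewrite gg dd mulr1.
have e3 : 0 <= eta3 by rewrite /eta3 subr_ge0; exact: CS.
apply: (@quad_root _ _ _ _ S11) => //.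
have -> : eta1 * S11 ^+ 2 + eta2 * S11 + eta3 = - (S12 - eps * S11) ^+ 2.
  by rewrite /eta1 /eta2 /eta3; ring.
by rewrite oppr_le0 sqr_ge0.
Qed.
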